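(* Let $\{\vec L_n\}_{n=1}^6$ be an oriented right-angled hexagon in $\mathbb H^3$ (indices modulo $6$), and for each $n$ let $\delta_n\in\mathbb C/2\pi i\mathbb Z$ be one of the two complex half side-lengths along $\vec L_n$. Then there exists $\varepsilon\in\{1,-1\}$ (depending on the choices of the $\delta_n$) such that \begin{align*} \cosh(\delta_1+\delta_3)\cosh\delta_2&=\varepsilon\cosh(\delta_4+\delta_6)\cosh\delta_5,\\ -\sinh(\delta_1+\delta_3)\cosh\delta_2&=\varepsilon\cosh(\delta_4-\delta_6)\sinh\delta_5,\\ -\cosh(\delta_1-\delta_3)\sinh\delta_2&=\varepsilon\sinh(\delta_4+\delta_6)\cosh\delta_5,\\ \sinh(\delta_1-\delta_3)\sinh\delta_2&=\varepsilon\sinh(\delta_4-\delta_6)\sinh\delta_5. \end{align*}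
   Context: Use the upper half-space model of $\mathbb H^3$ with boundary $\mathbb C\cup\{\infty\}$; $\vec L_{[u,v]}$ denotes the geodesic with endpoints $u,v$ oriented from $u$ to $v$. An oriented right-angled hexagon in $\mathbb H^3$ is a cyclic six-tuple of oriented complete geodesics $\vec L_1,\dots,\vec L_6$ such that $L_n$ and $L_{n+1}$ intersect perpendicularly for each $n$ modulo 6. Complex side-length along $\vec L_n$: let $\eta$ be the unique orientation-preserving isometry with $\eta(\vec L_n)=\vec L_{[0,\infty]}$ and $\eta(\vec L_{n-1})=\vec L_{[-1,1]}$; then $\eta(\vec L_{n+1})=\vec L_{[-z,z]}$ for some $z\in\mathbb C\setminus\{0\}$ and $\sigma_n=\log z\in\mathbb C/2\pi i\mathbb Z$. The two complex half side-lengths along $\vec L_n$ are the two elements $\delta\in\mathbb C/2\pi i\mathbb Z$ with $2\delta=\sigma_n$ (they differ by $\pi i$). *)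

(* Defs.v *)
From Stdlib Require Import Reals.
From Coquelicot Require Export Coquelicot.

Definition Cexp (z : C) : C :=
  (exp (Re z) * cos (Im z), exp (Re z) * sin (Im z))%R.
Definition Ccosh (z : C) : C := ((Cexp z + Cexp (- z)) / RtoC 2)%C.
Definition Csinh (z : C) : C := ((Cexp z - Cexp (- z)) / RtoC 2)%C.

(* Boundary of H^3 in the upper half-space model: C ∪ {∞};
   [Some w] is the point w of C, [None] is ∞. *)
Definition bdry := option C.
Definition infty : bdry := None.

(* Orientation-preserving isometries of H^3 = Moebius transformations
   w |-> (a w + b)/(c w + d), ad - bc <> 0, acting on the boundary;
   the isometry of H^3 is determined by (and identified with) this action. *)
Record moebius := Moeb { ma : C; mb : C; mc : C; md : C;
                         mdet : (ma * md - mb * mc)%C <> RtoC 0 }.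

Definition mact (g : moebius) (p : bdry) : bdry :=
  match p with
  | Some w => if Ceq_dec (mc g * w + md g)%C (RtoC 0) then None
              else Some ((ma g * w + mb g) / (mc g * w + md g))%C
  | None => if Ceq_dec (mc g) (RtoC 0) then None
            else Some (ma g / mc g)%C
  end.

(* Oriented complete geodesic L_[u,v]: ordered pair of distinct boundary
   points, oriented from u to v. *)
Record ogeod := OG { gstart : bdry; gend : bdry; gdist : gstart <> gend }.

Definition maps_to (g : moebius) (L : ogeod) (u v : bdry) : Prop :=
  mact g (gstart L) = u /\ mact g (gend L) = v.

(* L and L' (unoriented) intersect perpendicularly: some isometry sends L
   to the geodesic with endpoints {0, ∞} and L' to the geodesic with
   endpoints {-1, 1} (which intersect perpendicularly at the point (0,1)). *)
Definition perp (L L' : ogeod) : Prop :=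
  exists g : moebius,
    ((maps_to g L (Some (RtoC 0)) infty \/ maps_to g L infty (Some (RtoC 0))) /\
     (maps_to g L' (Some (RtoC (-1))) (Some (RtoC 1)) \/
      maps_to g L' (Some (RtoC 1)) (Some (RtoC (-1))))).

Definition ra_hexagon (L1 L2 L3 L4 L5 L6 : ogeod) : Prop :=
  perp L1 L2 /\ perp L2 L3 /\ perp L3 L4 /\ perp L4 L5 /\
  perp L5 L6 /\ perp L6 L1.

(* delta (a representative in C of a class in C/2πiZ) is a complex half
   side-length along L (with predecessor Lp and successor Ls): for the
   (unique) orientation-preserving isometry eta with eta(L) = L_[0,∞] and
   eta(Lp) = L_[-1,1], one has eta(Ls) = L_[-z,z] and sigma = log z;
   2 delta = sigma in C/2πiZ, i.e. exp(2 delta) = z. *)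
Definition half_side_length (Lp L Ls : ogeod) (delta : C) : Prop :=
  exists (eta : moebius) (z : C),
    maps_to eta L (Some (RtoC 0)) infty /\
    maps_to eta Lp (Some (RtoC (-1))) (Some (RtoC 1)) /\
    maps_to eta Ls (Some (- z)%C) (Some z) /\
    Cexp (RtoC 2 * delta)%C = z.

(* Main.v *)
Require Import Defs.
From Stdlib Require Import Reals Lra.
From Coquelicot Require Import Coquelicot.
Open Scope C_scope.

Lemma Cexp_add a b : Cexp (a + b) = Cexp a * Cexp b.
Proof.
  destruct a as [a1 a2], b as [b1 b2]. unfold Cexp, Cmult, Cplus; simpl.
  rewrite exp_plus, cos_plus, sin_plus. f_equal; ring.
Qed.

Lemma Cexp_0 : Cexp 0 = 1.
Proof. unfold Cexp, RtoC; simpl. rewrite exp_0, cos_0, sin_0. f_equal; ring. Qed.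

Lemma Cexp_nz a : Cexp a <> 0.
Proof.
  intro H. assert (H2 : Cexp (a + - a) = 0 :> C) by (rewrite Cexp_add, H; ring).
  replace (a + - a) with (RtoC 0) in H2 by ring. rewrite Cexp_0 in H2.
  injection H2; lra.
Qed.

Lemma Cexp_opp a : Cexp (- a) = / Cexp a.
Proof.
  assert (H : Cexp a * Cexp (- a) = 1).
  { rewrite <- Cexp_add. replace (a + - a) with (RtoC 0) by ring. apply Cexp_0. }
  generalize (Cexp_nz a); intro. 
  rewrite <- (Cmult_1_l (/ Cexp a)), <- H. field. auto.
Qed.

Lemma C2_nz : RtoC 2 <> 0.
Proof. intro H; injection H; lra. Qed.

Lemma Ccosh_eq z : Ccosh z = (Cexp z + / Cexp z) / 2.
Proof. unfold Ccosh. rewrite Cexp_opp. reflexivity. Qed.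
Lemma Csinh_eq z : Csinh z = (Cexp z - / Cexp z) / 2.
Proof. unfold Csinh. rewrite Cexp_opp. reflexivity. Qed.
Lemma Cexp_sub a b : Cexp (a - b) = Cexp a / Cexp b.
Proof. unfold Cminus. rewrite Cexp_add, Cexp_opp. reflexivity. Qed.
Lemma Cexp_2 d : Cexp (RtoC 2 * d) = Cexp d * Cexp d.
Proof. rewrite <- Cexp_add. f_equal. ring. Qed.

Lemma Cint a b : a * b = 0 -> a = 0 \/ b = 0.
Proof. intro H. destruct (Ceq_dec a 0) as [|Ha]; [now left|right].
  rewrite <- (Cmult_1_l b), <- (Cinv_l a Ha), <- Cmult_assoc, H. ring. Qed.

Definition vb (p : bdry) : C * C := match p with Some w => (w, RtoC 1) | None => (RtoC 1, RtoC 0) end.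

Lemma mact_vec g p q : mact g p = q -> exists l : C, l <> 0 /\
  ma g * fst (vb p) + mb g * snd (vb p) = l * fst (vb q) /\
  mc g * fst (vb p) + md g * snd (vb p) = l * snd (vb q).
Proof.
  destruct g as [a b c d hd]; simpl. intro H; subst q.
  destruct p as [w|]; simpl.
  - destruct (Ceq_dec (c * w + d) 0) as [E|E]; simpl.
    + exists (a * w + b). split.
      * intro F. apply hd.
        replace d with (- (c * w)) by (transitivity (c * w + d - c * w); [rewrite E|]; ring).
        replace b with (- (a * w)) by (transitivity (a * w + b - a * w); [rewrite F|]; ring). ring.
      * split; [ring|]. transitivity (c * w + d); [ring|rewrite E; ring].
    + exists (c * w + d). split; [exact E|]. split; [field; exact E|ring].
  - destruct (Ceq_dec c 0) as [E|E]; simpl.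
    + exists a. split.
      * intro F. apply hd. rewrite E, F. ring.
      * subst c. split; ring.
    + exists c. split; [exact E|]. split; [field; exact E|ring].
Qed.

Lemma solve2 (u v s1 s2 t1 t2 : C) : s1 * t2 - s2 * t1 <> 0 ->
  u * s1 + v * s2 = 0 -> u * t1 + v * t2 = 0 -> u = 0 /\ v = 0.
Proof.
  intros D H1 H2.
  assert (Hu : u * (s1 * t2 - s2 * t1) = 0).
  { transitivity (t2 * (u * s1 + v * s2) - s2 * (u * t1 + v * t2)); [ring|].
    rewrite H1, H2; ring. }
  assert (Hv : v * (s1 * t2 - s2 * t1) = 0).
  { transitivity (s1 * (u * t1 + v * t2) - t1 * (u * s1 + v * s2)); [ring|].
    rewrite H1, H2; ring. }
  split.
  - rewrite <- (Cmult_1_r u), <- (Cinv_r _ D), Cmult_assoc, Hu; ring.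
  - rewrite <- (Cmult_1_r v), <- (Cinv_r _ D), Cmult_assoc, Hv; ring.
Qed.

Lemma Cmul_nz (a b : C) : a <> 0 -> b <> 0 -> a * b <> 0.
Proof. intros Ha Hb H. apply Ha. rewrite <- (Cmult_1_r a), <- (Cinv_r _ Hb), Cmult_assoc, H; ring. Qed.

Lemma sub0 (x y : C) : x - y = 0 -> x = y.
Proof. intro H. transitivity (x - y + y); [ring| rewrite H; ring]. Qed.

Lemma step (g h : moebius) (s e t : bdry) (z : C) :
  z <> 0 ->
  mact g s = Some (- z) -> mact g e = Some z -> mact g t = Some (RtoC 0) ->
  mact h s = Some (RtoC 0) -> mact h e = None -> mact h t = Some (RtoC (-1)) ->
  exists k : C, k <> 0 /\ ma h = k * (ma g + z * mc g) /\ mb h = k * (mb g + z * md g)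
    /\ mc h = k * (ma g - z * mc g) /\ md h = k * (mb g - z * md g).
Proof.
  intros Hz G1 G2 G3 H1 H2 H3.
  apply mact_vec in G1, G2, G3, H1, H2, H3.
  destruct G1 as [a1 [A1 [G1a G1b]]], G2 as [a2 [A2 [G2a G2b]]], G3 as [a3 [A3 [G3a G3b]]].
  destruct H1 as [b1 [B1 [H1a H1b]]], H2 as [b2 [B2 [H2a H2b]]], H3 as [b3 [B3 [H3a H3b]]].
  destruct (vb s) as [s1 s2], (vb e) as [e1 e2], (vb t) as [t1 t2]; simpl in *.
  pose proof (mdet g) as Dg.
  set (k := - b3 / (z * a3)).
  assert (Dst : s1 * t2 - s2 * t1 <> 0).
  { intro F. assert (X : (ma g * md g - mb g * mc g) * (s1 * t2 - s2 * t1) = - a1 * z * a3).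
    { transitivity ((ma g * s1 + mb g * s2) * (mc g * t1 + md g * t2) - (mc g * s1 + md g * s2) * (ma g * t1 + mb g * t2)); [ring|].
      rewrite G1a, G1b, G3a, G3b. ring. }
    rewrite F, Cmult_0_r in X. apply (Cmul_nz (- a1 * z) a3); [apply Cmul_nz; [|exact Hz] | exact A3 | ].
    - intro Y. apply A1. transitivity (- (- a1)); [ring| rewrite Y; ring].
    - rewrite X. ring. }
  assert (Det : e1 * t2 - e2 * t1 <> 0).
  { intro F. assert (X : (ma g * md g - mb g * mc g) * (e1 * t2 - e2 * t1) = a2 * z * a3).
    { transitivity ((ma g * e1 + mb g * e2) * (mc g * t1 + md g * t2) - (mc g * e1 + md g * e2) * (ma g * t1 + mb g * t2)); [ring|].
      rewrite G2a, G2b, G3a, G3b. ring. }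
    rewrite F, Cmult_0_r in X. apply (Cmul_nz (a2 * z) a3); [apply Cmul_nz; assumption | exact A3 | ].
    rewrite X. ring. }
  destruct (solve2 (ma h - k * (ma g + z * mc g)) (mb h - k * (mb g + z * md g)) s1 s2 t1 t2 Dst) as [R1 R2].
  { transitivity ((ma h * s1 + mb h * s2) - k * ((ma g * s1 + mb g * s2) + z * (mc g * s1 + md g * s2))); [ring|].
    rewrite H1a, G1a, G1b. ring. }
  { transitivity ((ma h * t1 + mb h * t2) - k * ((ma g * t1 + mb g * t2) + z * (mc g * t1 + md g * t2))); [ring|].
    rewrite H3a, G3a, G3b. unfold k. field. split; assumption. }
  destruct (solve2 (mc h - k * (ma g - z * mc g)) (md h - k * (mb g - z * md g)) e1 e2 t1 t2 Det) as [R3 R4].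
  { transitivity ((mc h * e1 + md h * e2) - k * ((ma g * e1 + mb g * e2) - z * (mc g * e1 + md g * e2))); [ring|].
    rewrite H2b, G2a, G2b. ring. }
  { transitivity ((mc h * t1 + md h * t2) - k * ((ma g * t1 + mb g * t2) - z * (mc g * t1 + md g * t2))); [ring|].
    rewrite H3b, G3a, G3b. unfold k. field. split; assumption. }
  exists k. split.
  - unfold k. intro F. apply B3. 
    transitivity (- (- b3 / (z * a3)) * (z * a3)); [field; split; assumption|]. rewrite F; ring.
  - repeat split; apply sub0; assumption.
Qed.

Record mat := Mat { e11 : C; e12 : C; e21 : C; e22 : C }.
Definition mmul (A B : mat) : mat :=
  Mat (e11 A * e11 B + e12 A * e21 B) (e11 A * e12 B + e12 A * e22 B)
      (e21 A * e11 B + e22 A * e21 B) (e21 A * e12 B + e22 A * e22 B).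
Definition smul (k : C) (A : mat) : mat := Mat (k * e11 A) (k * e12 A) (k * e21 A) (k * e22 A).
Definition det (A : mat) : C := e11 A * e22 A - e12 A * e21 A.
Definition gm (g : moebius) : mat := Mat (ma g) (mb g) (mc g) (md g).
Definition Tm (z : C) : mat := Mat 1 z 1 (- z).
Definition Um (x : C) : mat := Mat (/ x) x (/ x) (- x).
Definition Id : mat := Mat 1 0 0 1.

Lemma mat_ext (A B : mat) : e11 A = e11 B -> e12 A = e12 B -> e21 A = e21 B -> e22 A = e22 B -> A = B.
Proof. destruct A, B; simpl; intros; subst; reflexivity. Qed.

Lemma mmul_assoc A B C : mmul (mmul A B) C = mmul A (mmul B C).
Proof. apply mat_ext; simpl; ring. Qed.
Lemma mmul_smul_r A k B : mmul A (smul k B) = smul k (mmul A B).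
Proof. apply mat_ext; simpl; ring. Qed.
Lemma mmul_smul_l A k B : mmul (smul k A) B = smul k (mmul A B).
Proof. apply mat_ext; simpl; ring. Qed.
Lemma smul_smul a b A : smul a (smul b A) = smul (a * b) A.
Proof. apply mat_ext; simpl; ring. Qed.
Lemma det_mul A B : det (mmul A B) = det A * det B.
Proof. unfold det; simpl; ring. Qed.
Lemma det_smul k A : det (smul k A) = k * k * det A.
Proof. unfold det; simpl; ring. Qed.
Lemma det_U (x : C) : x <> 0 -> det (Um x) = - RtoC 2.
Proof. intro. unfold det; simpl. field. auto. Qed.
Lemma T_U (x : C) : x <> 0 -> Tm (x * x) = smul x (Um x).
Proof. intro. apply mat_ext; simpl; field; auto. Qed.

Lemma step_mat (g h : moebius) (s e t : bdry) (z : C) :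
  z <> 0 ->
  mact g s = Some (- z) -> mact g e = Some z -> mact g t = Some (RtoC 0) ->
  mact h s = Some (RtoC 0) -> mact h e = None -> mact h t = Some (RtoC (-1)) ->
  exists k : C, gm h = smul k (mmul (Tm z) (gm g)).
Proof.
  intros. destruct (step g h s e t z) as [k [_ [E1 [E2 [E3 E4]]]]]; auto.
  exists k. apply mat_ext; simpl; [rewrite E1|rewrite E2|rewrite E3|rewrite E4]; ring.
Qed.

Lemma fix_id K P M : smul K (mmul P M) = M -> det M <> 0 -> smul K P = Id.
Proof.
  intros H D. destruct M as [m11 m12 m21 m22]. unfold det in D; simpl in D.
  assert (D' : m11 * m22 - m21 * m12 <> 0) by (intro F; apply D; rewrite <- F; ring).
  pose proof (f_equal e11 H) as H11; pose proof (f_equal e12 H) as H12;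
  pose proof (f_equal e21 H) as H21; pose proof (f_equal e22 H) as H22; simpl in *.
  destruct (solve2 (K * e11 P - 1) (K * e12 P) m11 m21 m12 m22 D') as [R1 R2].
  { transitivity (K * (e11 P * m11 + e12 P * m21) - m11); [ring|]. rewrite H11; ring. }
  { transitivity (K * (e11 P * m12 + e12 P * m22) - m12); [ring|]. rewrite H12; ring. }
  destruct (solve2 (K * e21 P) (K * e22 P - 1) m11 m21 m12 m22 D') as [R3 R4].
  { transitivity (K * (e21 P * m11 + e22 P * m21) - m21); [ring|]. rewrite H21; ring. }
  { transitivity (K * (e21 P * m12 + e22 P * m22) - m22); [ring|]. rewrite H22; ring. }
  apply mat_ext; simpl; try assumption; apply sub0; assumption.
Qed.

Definition Bm (a b c : C) := mmul (Um (Cexp c)) (mmul (Um (Cexp b)) (Um (Cexp a))).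

Ltac nzs := repeat split; try apply C2_nz; try apply Cexp_nz;
  try (let HH := fresh "HH" in intro HH; injection HH; lra).

Lemma P1 a b c : Ccosh (a + c) * Ccosh b =
  (e11 (Bm a b c) + e21 (Bm a b c) + e12 (Bm a b c) - e22 (Bm a b c)) / 8.
Proof. rewrite !Ccosh_eq, Cexp_add. unfold Bm; simpl. field. nzs. Qed.
Lemma P2 a b c : Csinh (a + c) * Ccosh b =
  (e12 (Bm a b c) - e22 (Bm a b c) - e11 (Bm a b c) - e21 (Bm a b c)) / 8.
Proof. rewrite Csinh_eq, !Ccosh_eq, Cexp_add. unfold Bm; simpl. field. nzs. Qed.
Lemma P3 a b c : Ccosh (a - c) * Csinh b =
  (e21 (Bm a b c) - e11 (Bm a b c) - e12 (Bm a b c) - e22 (Bm a b c)) / 8.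
Proof. rewrite Csinh_eq, !Ccosh_eq, Cexp_sub. unfold Bm; simpl. field. nzs. Qed.
Lemma P4 a b c : Csinh (a - c) * Csinh b =
  (e11 (Bm a b c) - e12 (Bm a b c) - e21 (Bm a b c) - e22 (Bm a b c)) / 8.
Proof. rewrite !Csinh_eq, Cexp_sub. unfold Bm; simpl. field. nzs. Qed.

Lemma core (W B : mat) (K : C) : det W = - RtoC 8 -> det B = - RtoC 8 ->
  smul K (mmul W B) = Id -> exists s : C, (s = 1 \/ s = -1) /\
  e11 B = s * e22 W /\ e12 B = s * (- e12 W) /\ e21 B = s * (- e21 W) /\ e22 B = s * e11 W.
Proof.
  intros dW dB H.
  pose proof (f_equal det H) as HD. rewrite det_smul, det_mul, dW, dB in HD.
  unfold det, Id in HD; simpl in HD.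
  destruct W as [w11 w12 w21 w22], B as [b11 b12 b21 b22].
  unfold det in dW; simpl in dW.
  pose proof (f_equal e11 H) as X11; pose proof (f_equal e12 H) as X12;
  pose proof (f_equal e21 H) as X21; pose proof (f_equal e22 H) as X22;
  unfold Id in *; simpl in X11, X12, X21, X22. simpl.
  assert (A11 : K * (- RtoC 8) * b11 = w22).
  { rewrite <- dW. transitivity (w22 * (K * (w11 * b11 + w12 * b21)) - w12 * (K * (w21 * b11 + w22 * b21))); [ring|].
    rewrite X11, X21. ring. }
  assert (A12 : K * (- RtoC 8) * b12 = - w12).
  { rewrite <- dW. transitivity (w22 * (K * (w11 * b12 + w12 * b22)) - w12 * (K * (w21 * b12 + w22 * b22))); [ring|].
    rewrite X12, X22. ring. }
  assert (A21 : K * (- RtoC 8) * b21 = - w21).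
  { rewrite <- dW. transitivity (- w21 * (K * (w11 * b11 + w12 * b21)) + w11 * (K * (w21 * b11 + w22 * b21))); [ring|].
    rewrite X11, X21. ring. }
  assert (A22 : K * (- RtoC 8) * b22 = w11).
  { rewrite <- dW. transitivity (- w21 * (K * (w11 * b12 + w12 * b22)) + w11 * (K * (w21 * b12 + w22 * b22))); [ring|].
    rewrite X12, X22. ring. }
  assert (Hk : (RtoC 8 * K - 1) * (RtoC 8 * K + 1) = 0).
  { transitivity (K * K * (- RtoC 8 * - RtoC 8) - 1); [ring|]. rewrite HD. ring. }
  assert (G : forall s : C, RtoC 8 * K = - s -> (s = 1 \/ s = -1) ->
     exists s : C, (s = 1 \/ s = -1) /\
  b11 = s * w22 /\ b12 = s * (- w12) /\ b21 = s * (- w21) /\ b22 = s * w11).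
  { intros s Hs Hs1.
    assert (S2 : s * s = 1) by (destruct Hs1; subst; ring).
    assert (F : forall y w, K * (- RtoC 8) * y = w -> y = s * w).
    { intros y w E. rewrite <- E. transitivity (s * s * y); [rewrite S2; ring|].
      transitivity (s * (- (RtoC 8 * K)) * y); [rewrite Hs; ring| ring]. }
    exists s. split; [exact Hs1|]. repeat split; apply F; assumption. }
  apply Cint in Hk. destruct Hk as [Hk|Hk].
  - apply (G (-1)); [|right; reflexivity]. transitivity (RtoC 8 * K - 1 + 1); [ring|]. rewrite Hk; ring.
  - apply (G 1); [|left; reflexivity]. transitivity (RtoC 8 * K + 1 - 1); [ring|]. rewrite Hk; ring.
Qed.

Lemma final (d1 d2 d3 d4 d5 d6 K : C) :
  smul K (mmul (Bm d4 d5 d6) (Bm d1 d2 d3)) = Id ->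
  exists eps : C, (eps = RtoC 1 \/ eps = RtoC (-1)) /\
    (Ccosh (d1 + d3) * Ccosh d2 = eps * (Ccosh (d4 + d6) * Ccosh d5))%C /\
    (- (Csinh (d1 + d3) * Ccosh d2) = eps * (Ccosh (d4 - d6) * Csinh d5))%C /\
    (- (Ccosh (d1 - d3) * Csinh d2) = eps * (Csinh (d4 + d6) * Ccosh d5))%C /\
    (Csinh (d1 - d3) * Csinh d2 = eps * (Csinh (d4 - d6) * Csinh d5))%C.
Proof.
  intro H.
  assert (DW : forall a b c, det (Bm a b c) = - RtoC 8).
  { intros. unfold Bm. rewrite !det_mul, !det_U by apply Cexp_nz. ring. }
  destruct (core _ _ _ (DW d4 d5 d6) (DW d1 d2 d3) H) as [s [Hs1 [A11 [A12 [A21 A22]]]]].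
  exists (- s). split.
  { destruct Hs1 as [-> | ->]; [right|left]; apply injective_projections; simpl; lra. }
  rewrite P1, P2, P3, P4, P1, P2, P3, P4.
  rewrite A11, A12, A21, A22. repeat split; field; nzs.
Qed.

Theorem theorem7p9 (L1 L2 L3 L4 L5 L6 : ogeod) (d1 d2 d3 d4 d5 d6 : C) :
  ra_hexagon L1 L2 L3 L4 L5 L6 ->
  half_side_length L6 L1 L2 d1 ->
  half_side_length L1 L2 L3 d2 ->
  half_side_length L2 L3 L4 d3 ->
  half_side_length L3 L4 L5 d4 ->
  half_side_length L4 L5 L6 d5 ->
  half_side_length L5 L6 L1 d6 ->
  exists eps : C, (eps = RtoC 1 \/ eps = RtoC (-1)) /\
    (Ccosh (d1 + d3) * Ccosh d2 = eps * (Ccosh (d4 + d6) * Ccosh d5))%C /\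
    (- (Csinh (d1 + d3) * Ccosh d2) = eps * (Ccosh (d4 - d6) * Csinh d5))%C /\
    (- (Ccosh (d1 - d3) * Csinh d2) = eps * (Csinh (d4 + d6) * Ccosh d5))%C /\
    (Csinh (d1 - d3) * Csinh d2 = eps * (Csinh (d4 - d6) * Csinh d5))%C.
Proof.
  intros _ H1 H2 H3 H4 H5 H6.
  destruct H1 as [g1 [z1 [[A1 B1] [[C1 D1] [[E1 F1] G1]]]]].
  destruct H2 as [g2 [z2 [[A2 B2] [[C2 D2] [[E2 F2] G2]]]]].
  destruct H3 as [g3 [z3 [[A3 B3] [[C3 D3] [[E3 F3] G3]]]]].
  destruct H4 as [g4 [z4 [[A4 B4] [[C4 D4] [[E4 F4] G4]]]]].
  destruct H5 as [g5 [z5 [[A5 B5] [[C5 D5] [[E5 F5] G5]]]]].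
  destruct H6 as [g6 [z6 [[A6 B6] [[C6 D6] [[E6 F6] G6]]]]].
  rewrite Cexp_2 in G1, G2, G3, G4, G5, G6.
  assert (Z : forall d z, Cexp d * Cexp d = z -> z <> 0).
  { intros d z <-. apply Cmul_nz; apply Cexp_nz. }
  destruct (step_mat g1 g2 _ _ _ z1 (Z _ _ G1) E1 F1 A1 A2 B2 C2) as [k1 S1].
  destruct (step_mat g2 g3 _ _ _ z2 (Z _ _ G2) E2 F2 A2 A3 B3 C3) as [k2 S2].
  destruct (step_mat g3 g4 _ _ _ z3 (Z _ _ G3) E3 F3 A3 A4 B4 C4) as [k3 S3].
  destruct (step_mat g4 g5 _ _ _ z4 (Z _ _ G4) E4 F4 A4 A5 B5 C5) as [k4 S4].
  destruct (step_mat g5 g6 _ _ _ z5 (Z _ _ G5) E5 F5 A5 A6 B6 C6) as [k5 S5].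
  destruct (step_mat g6 g1 _ _ _ z6 (Z _ _ G6) E6 F6 A6 A1 B1 C1) as [k6 S6].
  rewrite S5 in S6. rewrite S4 in S6. rewrite S3 in S6. rewrite S2 in S6. rewrite S1 in S6.
  rewrite <- G1, <- G2, <- G3, <- G4, <- G5, <- G6 in S6.
  rewrite !T_U in S6 by apply Cexp_nz.
  repeat first [rewrite mmul_smul_l in S6 | rewrite mmul_smul_r in S6 | rewrite smul_smul in S6].
  symmetry in S6.
  rewrite <- !mmul_assoc in S6.
  apply fix_id in S6; [| unfold det, gm; simpl; apply (mdet g1)].
  match type of S6 with smul ?K _ = _ => apply (final d1 d2 d3 d4 d5 d6 K) end.
  rewrite <- S6. f_equal. unfold Bm. rewrite !mmul_assoc. reflexivity.
Qed.
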